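(* In the construction below, every nonempty $E^*\subseteq E$ with $|E^*| < st+2k$ satisfies $\beta(E^* ) > B$; in particular, no such $E^*$ is an admissible solution of the constructed CSCN instance.
   Context: Let $G'=(V',E')$ be a connected undirected graph, let $S=\{u_1,\dots,u_s\}\subseteq V'$ with $s=|S|$, and let $k\ge 0$ be a real number with $|E'|\ge 2k$. Let $t\ge 1$ be an integer. Let $V = V'\cup\{v_{i,j} : 1\le i\le s,\ 1\le j\le t\}$ (the $v_{i,j}$ are new vertices) and let $E$ be the set of all pairs of vertices of $V$ (edges undirected). Define $w^*:E\to\mathbb{R}$ by: $w^*(\{v_{i,j},u_i\})=1$ for all $i,j$; $w^*(\{v_{i,j},u\})=0$ for every $u\in V\setminus\{u_i\}$; $w^*(e)=\frac12$ for every $e\in E'$; $w^*(\{u,u'\})=0$ for $u,u'\in V'$ with $\{u,u'\}\notin E'$. Set $A=\frac{st+k}{st+2k}$ and $B=\frac{\frac12(|E'|-2k)}{st+2k}$. For nonempty $E^*\subseteq E$ let $\alpha(E^* )=\frac{\sum_{e\in E^*}w^*(e)}{|E^*|}$ and $\beta(E^* )=\frac{\sum_{e\in E\setminus E^*}w^*(e)}{|E^*|}$. The graph induced by $E^*$ has vertex set the vertices incident to some edge of $E^*$ and edge set $E^*$. An admissible solution of the constructed CSCN instance is a nonempty $E^*\subseteq E$ whose induced graph is connected and which satisfies $\alpha(E^* )\ge A$ and $\beta(E^* )\le B$. *)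

(* Defs.v *)
From HB Require Import structures.
From mathcomp Require Import all_boot all_order all_algebra.
Set Implicit Arguments. Unset Strict Implicit. Unset Printing Implicit Defensive.
Import Order.TTheory GRing.Theory Num.Theory.
Local Open Scope ring_scope.

Definition simple_edges (T : finType) (Ep : {set {set T}}) : Prop :=
  forall e, e \in Ep -> #|e| = 2%N.

Definition gadj (T : finType) (Ep : {set {set T}}) : rel T :=
  fun x y => [set x; y] \in Ep.

Definition graph_connected (T : finType) (Ep : {set {set T}}) : Prop :=
  forall x y : T, connect (gadj Ep) x y.

(* Constructed vertex set V = V' + {v_{i,j}}: inl x is x in V', inr (i,j) is v_{i,j}. *)
Definition VX (T : finType) (s t : nat) : finType := (T + ('I_s * 'I_t))%type.

Definition Eall (V : finType) : {set {set V}} := [set e : {set V} | #|e| == 2%N].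

(* The weight function w^* ; u i is the vertex u_i of S. *)
Definition wstar (R : realFieldType) (T : finType) (s t : nat) (u : 'I_s -> T)
  (Ep : {set {set T}}) (e : {set VX T s t}) : R :=
  if [exists i : 'I_s, exists j : 'I_t,
        e == [set (inr (i, j) : VX T s t); inl (u i)]] then 1
  else if [exists x : T, exists y : T,
        (e == [set (inl x : VX T s t); inl y]) && ([set x; y] \in Ep)] then 1 / 2
  else 0.

Definition alpha (R : realFieldType) (T : finType) (s t : nat) (u : 'I_s -> T)
  (Ep : {set {set T}}) (Es : {set {set VX T s t}}) : R :=
  (\sum_(e in Es) wstar R u Ep e) / #|Es|%:R.

Definition beta (R : realFieldType) (T : finType) (s t : nat) (u : 'I_s -> T)
  (Ep : {set {set T}}) (Es : {set {set VX T s t}}) : R :=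
  (\sum_(e in Eall (VX T s t) :\: Es) wstar R u Ep e) / #|Es|%:R.

Definition Aconst (R : realFieldType) (s t : nat) (k : R) : R :=
  ((s * t)%N%:R + k) / ((s * t)%N%:R + 2 * k).

Definition Bconst (R : realFieldType) (T : finType) (Ep : {set {set T}})
  (s t : nat) (k : R) : R :=
  (1 / 2 * (#|Ep|%:R - 2 * k)) / ((s * t)%N%:R + 2 * k).

Definition incident (V : finType) (Es : {set {set V}}) (x : V) : bool :=
  [exists e in Es, x \in e].

Definition eadj (V : finType) (Es : {set {set V}}) : rel V :=
  fun x y => [exists e in Es, (x \in e) && (y \in e) && (x != y)].

Definition induced_connected (V : finType) (Es : {set {set V}}) : Prop :=
  forall x y, incident Es x -> incident Es y -> connect (eadj Es) x y.

Definition admissible (R : realFieldType) (T : finType) (s t : nat) (u : 'I_s -> T)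
  (Ep : {set {set T}}) (k : R) (Es : {set {set VX T s t}}) : Prop :=
  [/\ Es \subset Eall (VX T s t), Es != set0, induced_connected Es,
      alpha R u Ep Es >= Aconst s t k & beta R u Ep Es <= Bconst Ep s t k].

(* Main.v *)
Require Import Defs.
From HB Require Import structures.
From mathcomp Require Import all_boot all_order all_algebra.
From mathcomp Require Import lra.
Import Order.TTheory GRing.Theory Num.Theory.
Local Open Scope ring_scope.

Section Aux.
Variables (R : realFieldType) (T : finType) (Ep : {set {set T}}) (s t : nat) (u : 'I_s -> T).
Hypothesis hsimple : simple_edges Ep.

Let V := VX T s t.
Definition fA (p : 'I_s * 'I_t) : {set V} := [set (inr p : V); inl (u p.1)].
Definition gB (e : {set T}) : {set V} := [set (inl x : V) | x in e].
Definition SA : {set {set V}} := [set fA p | p in [set: 'I_s * 'I_t]].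
Definition SB : {set {set V}} := [set gB e | e in Ep].

Lemma w_ge0 e : 0 <= @wstar R T s t u Ep e.
Proof. rewrite /wstar; case: ifP => _; [lra|case: ifP => _; lra]. Qed.

Lemma w_le1 e : @wstar R T s t u Ep e <= 1.
Proof. rewrite /wstar; case: ifP => _; [lra|case: ifP => _; lra]. Qed.

Lemma w_offA e : e \notin SA -> @wstar R T s t u Ep e <= 1/2.
Proof.
move=> hA; rewrite /wstar; case: ifP => [/existsP [i /existsP [j /eqP he]]|_].
  by exfalso; move/negP: hA; apply; apply/imsetP; exists (i, j); rewrite ?inE.
by case: ifP => _; lra.
Qed.

Lemma w_fA p : @wstar R T s t u Ep (fA p) = 1.
Proof.
rewrite /wstar; case: ifP => // /negbT/negP []; apply/existsP; exists p.1;
apply/existsP; exists p.2; by case: p.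
Qed.

Lemma fA_inj : injective fA.
Proof.
move=> p q h.
have : (inr p : V) \in fA q by rewrite -h /fA !inE eqxx.
by rewrite /fA !inE => /orP [/eqP [] | /eqP].
Qed.

Lemma gB_inj : injective gB.
Proof.
move=> a b h; apply/setP => x.
by rewrite -(mem_imset _ _ (@inl_inj T ('I_s * 'I_t))) -/(gB a) h mem_imset //; exact: inl_inj.
Qed.

Lemma w_gB e : e \in Ep -> @wstar R T s t u Ep (gB e) = 1/2.
Proof.
move=> he; rewrite /wstar; case: ifP => [/existsP [i /existsP [j /eqP h]]|_].
  have : (inr (i, j) : V) \in gB e by rewrite h !inE eqxx.
  by case/imsetP.
case: ifP => // /negbT/negP []; move: (hsimple _ he) => /eqP /cards2P [x [y [_ exy]]].
apply/existsP; exists x; apply/existsP; exists y; rewrite -exy he andbT.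
by rewrite /gB exy imsetU1 imset_set1.
Qed.

Lemma SA_sub : SA \subset Eall V.
Proof.
apply/subsetP => e /imsetP [p _ ->]; rewrite inE /fA cards2; by [].
Qed.

Lemma SB_sub : SB \subset Eall V.
Proof.
apply/subsetP => e /imsetP [a ha ->]; rewrite inE /gB card_imset; last exact: inl_inj.
by rewrite hsimple.
Qed.

Lemma SAB_disj : SA :&: SB = set0.
Proof.
apply/setP => e; rewrite !inE; apply/negP => /andP [/imsetP [p _ ->] /imsetP [a _ h]].
have : (inr p : V) \in gB a by rewrite -h /fA !inE eqxx.
by case/imsetP.
Qed.

Lemma card_SA : (#|SA| = s * t)%N.
Proof.
rewrite /SA card_imset; last exact: fA_inj.
by rewrite cardsT card_prod !card_ord.
Qed.

Lemma card_SB : (#|SB| = #|Ep|)%N.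
Proof. rewrite /SB card_imset //; exact: gB_inj. Qed.

Lemma sum_all : (s * t)%N%:R + #|Ep|%:R / 2 <= \sum_(e in Eall V) @wstar R T s t u Ep e.
Proof.
rewrite (big_setID (SA :|: SB)) /=.
have -> : Eall V :&: (SA :|: SB) = SA :|: SB.
  by apply/setIidPr; rewrite subUset SA_sub SB_sub.
have h0 : 0 <= \sum_(e in Eall V :\: (SA :|: SB)) @wstar R T s t u Ep e.
  by apply: sumr_ge0 => e _; exact: w_ge0.
rewrite (big_setID SA) /=.
have -> : (SA :|: SB) :&: SA = SA by apply/setIidPr; exact: subsetUl.
have -> : (SA :|: SB) :\: SA = SB.
  by rewrite setDUl setDv set0U; apply/setDidPl; rewrite disjoint_sym -setI_eq0 SAB_disj.
rewrite /SA big_imset /=; last by move=> p q _ _; exact: fA_inj.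
rewrite /SB big_imset /=; last by move=> p q _ _; exact: gB_inj.
have -> : \sum_(p in [set: 'I_s * 'I_t]) @wstar R T s t u Ep (fA p) = \sum_(p in [set: 'I_s * 'I_t]) (1 : R).
  by apply: eq_bigr => p _; exact: w_fA.
have -> : \sum_(e in Ep) @wstar R T s t u Ep (gB e) = \sum_(e in Ep) (1/2 : R).
  apply: eq_bigr => e he; by rewrite (@w_gB e he).
rewrite -/SA -/SB.
rewrite !sumr_const cardsT card_prod !card_ord -[1/2 *+ _]mulr_natr.
lra.
Qed.

Lemma sum_Es (Es : {set {set V}}) :
  2 * \sum_(e in Es) @wstar R T s t u Ep e <= #|Es|%:R + (s * t)%N%:R.
Proof.
rewrite (big_setID SA) /=.
have h1 : \sum_(e in Es :&: SA) @wstar R T s t u Ep e <= #|Es :&: SA|%:R.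
  rewrite -sum1_card natr_sum; apply: ler_sum => e _; exact: w_le1.
have h2 : \sum_(e in Es :\: SA) @wstar R T s t u Ep e <= #|Es :\: SA|%:R / 2.
  rewrite -sum1_card natr_sum mulr_suml; apply: ler_sum => e.
  rewrite inE => /andP [he _]; rewrite mul1r; move: (@w_offA e he); lra.
have h3 : (#|Es :&: SA| <= s * t)%N.
  by rewrite -card_SA; apply: subset_leq_card; exact: subsetIr.
have h4 : #|Es :&: SA|%:R <= (s * t)%N%:R :> R by rewrite ler_nat.
have h5 : #|Es|%:R = #|Es :&: SA|%:R + #|Es :\: SA|%:R :> R.
  by rewrite -natrD cardsID.
lra.
Qed.

End Aux.

Theorem lemma1 (R : realFieldType) (T : finType) (Ep : {set {set T}})
  (hsimple : simple_edges Ep) (hconn : graph_connected Ep)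
  (s : nat) (u : 'I_s -> T) (hu : injective u)
  (k : R) (hk : 0 <= k) (hEp : 2 * k <= #|Ep|%:R)
  (t : nat) (ht : (1 <= t)%N)
  (Es : {set {set VX T s t}}) :
  Es \subset Eall (VX T s t) -> Es != set0 ->
  #|Es|%:R < (s * t)%N%:R + 2 * k ->
  beta R u Ep Es > Bconst Ep s t k /\ ~ admissible u Ep k Es.
Proof.
move=> hsub hne hlt.
have hb : beta R u Ep Es > Bconst Ep s t k.
  have hall := @sum_all R T Ep s t u hsimple.
  have hes := @sum_Es R T Ep s t u Es.
  rewrite /beta /Bconst.
  have hsplit : \sum_(e in Eall (VX T s t) :\: Es) wstar R u Ep e =
     \sum_(e in Eall (VX T s t)) wstar R u Ep e - \sum_(e in Es) wstar R u Ep e.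
    rewrite [X in _ = X - _](big_setID Es) /=.
    have -> : Eall (VX T s t) :&: Es = Es by apply/setIidPr.
    by rewrite addrC addrK.
  rewrite hsplit.
  set W := \sum_(e in Eall _) _ in hall hsplit *.
  set S := \sum_(e in Es) _ in hes hsplit *.
  set m := #|Es|%:R in hlt hes *.
  set st := (s * t)%N%:R in hlt hes hall *.
  set E := #|Ep|%:R in hEp hall *.
  have hm : 1 <= m.
    by rewrite /m ler1n lt0n cards_eq0.
  have hst : 0 <= st by rewrite /st ler0n.
  have hN : 0 < st + 2 * k by lra.
  rewrite ltr_pdivrMr //.
  have hm0 : m != 0 by apply/negP => /eqP h0; rewrite h0 in hm; lra.
  have hq : (W - S) / m * m = W - S by rewrite divfK.
  set q := (W - S) / m in hq *.
  have hpos : 0 < (st + 2 * k - m) * (st + E) by apply: mulr_gt0; lra.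
  have key : (1 / 2 * (E - 2 * k)) * m < (st + 2 * k) * (W - S) by nra.
  rewrite -hq in key.
  rewrite ltNge; apply/negP => hc.
  have : q * (st + 2 * k) * m <= 1 / 2 * (E - 2 * k) * m.
    by apply: ler_wpM2r => //; lra.
  nra.
split => // [[_ _ _ _ hle]].
by move: hb; rewrite ltNge hle.
Qed.
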